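(* Let $\varepsilon>0$, $\Omega\subset\mathbb{R}^2$ bounded open, $u\in\mathcal{SF}_\varepsilon(\Omega)$ and $R\in\mathcal{R}_\varepsilon(u)$. Then exactly one of the following holds: (i) $R\in\mathcal{T}_\varepsilon$; (ii) every triangle $T\in\mathcal{T}_\varepsilon$ with $T\subset R$ has two edges in $\mathcal{N}_\varepsilon(u)$; (iii) there are exactly two triangles $T\in\mathcal{T}_\varepsilon$, $T\subset R$, having two edges in $\mathcal{C}_\varepsilon(u)$, and all the other triangles $T\subset R$ of $\mathcal{T}_\varepsilon$ have two edges in $\mathcal{N}_\varepsilon(u)$.
   Context: $\mathcal{L}=\{ae_1+b\hat e_2:a,b\in\mathbb{Z}\}$ with $e_1=(1,0)$, $\hat e_2=\frac12(1,\sqrt3)$, $\mathcal{L}_\varepsilon=\varepsilon\mathcal{L}$; $\mathcal{T}_\varepsilon$ is the set of closed triangles with vertices in $\mathcal{L}_\varepsilon$ pairwise at distance $\varepsilon$; $\mathcal{E}_\varepsilon$ the set of segments $[i,j]$, $i,j\in\mathcal{L}_\varepsilon$, $|i-j|=\varepsilon$. $n=(0,0,1)$; $\mathcal{SF}_\varepsilon(\Omega)$ is the set of $u:\mathcal{L}_\varepsilon\to\mathbb{S}^2$ with $u=n$ on $\mathcal{L}_\varepsilon\setminus\Omega$. $\mathcal{N}_\varepsilon(u)=\{[i,j]\in\mathcal{E}_\varepsilon:u(i)=-u(j)\}$, $\mathcal{C}_\varepsilon(u)=\mathcal{E}_\varepsilon\setminus\mathcal{N}_\varepsilon(u)$. Two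 triangles of $\mathcal{T}_\varepsilon$ are neighbours if their intersection is an edge in $\mathcal{N}_\varepsilon(u)$, and connected if joined by a finite chain of consecutive neighbours. $\mathcal{R}_\varepsilon(u)$ is the set of admissible interpolation regions: unions of pairwise connected triangles of $\mathcal{T}_\varepsilon$ that are maximal with respect to inclusion. *)

(* Defs.v *)
From HB Require Import structures.
From mathcomp Require Import all_boot all_order all_algebra.
From mathcomp Require Import all_classical all_reals all_analysis.
Set Implicit Arguments. Unset Strict Implicit. Unset Printing Implicit Defensive.
Import Order.TTheory GRing.Theory Num.Theory.
Import numFieldNormedType.Exports.
Local Open Scope ring_scope.
Local Open Scope classical_set_scope.

(* Lattice points a e1 + b e2hat are indexed by (a, b) : int * int. *)
Definition latpt := (int * int)%type.

Section TriangularLattice.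
Variable R : realType.

Definition lat_point (eps : R) (p : latpt) : R * R :=
  (eps * (p.1%:~R + p.2%:~R / 2), eps * (p.2%:~R * Num.sqrt 3 / 2)).

Definition lat_dist (eps : R) (p q : latpt) : R :=
  Num.sqrt (((lat_point eps p).1 - (lat_point eps q).1) ^+ 2
          + ((lat_point eps p).2 - (lat_point eps q).2) ^+ 2).

Definition adjacent (eps : R) (p q : latpt) : Prop := lat_dist eps p q = eps.

(* T_eps: a (closed) triangle is represented by its set of three vertices *)
Definition is_triangle (eps : R) (T : set latpt) : Prop :=
  exists i j k, [/\ T = [set i; j; k], adjacent eps i j, adjacent eps j k
                 & adjacent eps i k].

(* E_eps: a segment [i,j] is represented by its set of two endpoints *)
Definition is_edge (eps : R) (e : set latpt) : Prop :=
  exists i j, e = [set i; j] /\ adjacent eps i j.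

Definition edge_of (eps : R) (e T : set latpt) : Prop := is_edge eps e /\ e `<=` T.

Definition on_sphere (v : 'rV[R]_3) : Prop := \sum_(k < 3) (v 0 k) ^+ 2 = 1.
Definition north : 'rV[R]_3 := \row_(k < 3) ((val k == 2%N)%:R).

Definition SF (eps : R) (Om : set (R * R)) (u : latpt -> 'rV[R]_3) : Prop :=
  (forall i, on_sphere (u i)) /\ (forall i, ~ Om (lat_point eps i) -> u i = north).

Definition in_N (eps : R) (u : latpt -> 'rV[R]_3) (e : set latpt) : Prop :=
  exists i j, [/\ e = [set i; j], adjacent eps i j & u i = - u j].
Definition in_C (eps : R) (u : latpt -> 'rV[R]_3) (e : set latpt) : Prop :=
  is_edge eps e /\ ~ in_N eps u e.

Definition neighbours (eps : R) (u : latpt -> 'rV[R]_3) (T T' : set latpt) : Prop :=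
  [/\ is_triangle eps T, is_triangle eps T' & in_N eps u (T `&` T')].

Inductive connected (eps : R) (u : latpt -> 'rV[R]_3) : set latpt -> set latpt -> Prop :=
  | conn_refl T : connected eps u T T
  | conn_step T1 T2 T3 : connected eps u T1 T2 -> neighbours eps u T2 T3 ->
                         connected eps u T1 T3.

Definition pw_connected (eps : R) (u : latpt -> 'rV[R]_3) (S : set (set latpt)) : Prop :=
  (forall T, S T -> is_triangle eps T) /\
  (forall T T', S T -> S T' -> connected eps u T T').

(* R_eps(u): an admissible interpolation region is the union of a maximal
   family of pairwise connected triangles; it is represented by that family *)
Definition admissible_region (eps : R) (u : latpt -> 'rV[R]_3) (S : set (set latpt)) : Prop :=
  pw_connected eps u S /\
  (forall S', pw_connected eps u S' -> S `<=` S' -> S' = S).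

Definition two_edges_N (eps : R) (u : latpt -> 'rV[R]_3) (T : set latpt) : Prop :=
  exists e1 e2, [/\ e1 <> e2, edge_of eps e1 T, edge_of eps e2 T,
                    in_N eps u e1 & in_N eps u e2].
Definition two_edges_C (eps : R) (u : latpt -> 'rV[R]_3) (T : set latpt) : Prop :=
  exists e1 e2, [/\ e1 <> e2, edge_of eps e1 T, edge_of eps e2 T,
                    in_C eps u e1 & in_C eps u e2].

End TriangularLattice.

Definition exactly_one_of3 (A B C : Prop) : Prop :=
  (A /\ ~ B /\ ~ C) \/ (~ A /\ B /\ ~ C) \/ (~ A /\ ~ B /\ C).

(* Main.v *)
Require Import Defs.
From HB Require Import structures.
From mathcomp Require Import all_boot all_order all_algebra.
From mathcomp Require Import all_classical all_reals all_analysis.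
From mathcomp Require Import zify ring lra.
Import Order.TTheory GRing.Theory Num.Theory.
Import numFieldNormedType.Exports.
Local Open Scope ring_scope.
Local Open Scope classical_set_scope.
Set Implicit Arguments. Unset Strict Implicit.



Section Graph.
Variable V : Type.
Variable E : V -> V -> Prop.
Hypothesis Esym : forall {x y}, E x y -> E y x.
Hypothesis Eirr : forall x, ~ E x x.

Inductive cin (S : V -> Prop) (x : V) : V -> Prop :=
  | cin_refl : cin S x x
  | cin_step y z : cin S x y -> S z -> E y z -> cin S x z.

Definition leafin (S : V -> Prop) x :=
  exists y, [/\ S y, E x y & forall z, S z -> E x z -> z = y].

Lemma cin_in S x y : cin S x y -> S x -> S y.
Proof. by elim=> // ? ? ? ? ? ? ?. Qed.
Arguments cin_in {S x y}.
Arguments cin_step {S x y z}.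
Arguments cin_refl {S x}.

Lemma filter_len (a : V) (l : list V) : List.In a l ->
  (length (List.filter (fun x => ~~ `[< x = a >]) l) < length l)%coq_nat.
Proof.
elim: l => //= y l IH [->|H].
  rewrite asboolT //=.
  have : (length (List.filter (fun x => ~~ `[< x = a >]) l) <= length l)%coq_nat.
    by apply: List.filter_length_le.
  lia.
case: (~~ _) => /=; have := IH H; lia.
Qed.

Lemma graph_main n : forall (S : V -> Prop) (l : list V),
  (length l <= n)%coq_nat -> (forall x, S x -> List.In x l) ->
  (forall x y, S x -> S y -> cin S x y) ->
  (forall x y z w, S x -> S y -> S z -> S w -> E x y -> E x z -> E x w ->
     y = z \/ y = w \/ z = w) ->
  forall a, S a -> leafin S a ->
  exists b, [/\ S b, b <> a, leafin S b &
            forall c, S c -> leafin S c -> c = a \/ c = b].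
Proof.
elim: n => [|n IH] S l Hl Hcov Hcon Hdeg a Sa [b [Sb Eab Hb]].
  by case: l Hl Hcov => [|? ?] /= Hl Hcov; [case: (Hcov a Sa) | lia].
have ba : b <> a by move=> eba; apply: (@Eirr a); rewrite -{2}eba.
have [[c [Sc Ebc ca]]|nc] := pselect (exists c, [/\ S c, E b c & c <> a]).
  pose S' := fun x => S x /\ x <> a.
  pose l' := List.filter (fun x => ~~ `[< x = a >]) l.
  have Hl' : (length l' <= n)%coq_nat.
    have := @filter_len a l (Hcov a Sa); rewrite -/l'; lia.
  have Hcov' : forall x, S' x -> List.In x l'.
    move=> x [Sx xa]; apply/List.filter_In; split; first exact: Hcov.
    by apply/negP => /asboolP.
  have key : forall x y, cin S x y -> S x -> x <> a ->
     (y = a /\ cin S' x b) \/ (y <> a /\ cin S' x y).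
    move=> x y; elim=> [|y0 z Hc IHc Sz Eyz] Sx xa.
      by right; split => //; apply: cin_refl.
    have Sy0 := cin_in Hc Sx.
    case: (IHc Sx xa) => [[ya Hxb]|[ya Hxy]].
      have zb : z = b by apply: Hb => //; rewrite -ya.
      by right; rewrite zb; split.
    have [za|za] := pselect (z = a).
      left; split => //.
      have : y0 = b by apply: Hb => //; apply: Esym; rewrite -za.
      by move=> <-.
    right; split => //; apply: (cin_step Hxy _ Eyz); by split.
  have Hcon' : forall x y, S' x -> S' y -> cin S' x y.
    move=> x y [Sx xa] [Sy ya]; case: (key x y (Hcon x y Sx Sy) Sx xa) => [[]|[]] //.
  have Hdeg' : forall x y z w, S' x -> S' y -> S' z -> S' w -> E x y -> E x z -> E x w ->
     y = z \/ y = w \/ z = w.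
    by move=> x y z w [? _] [? _] [? _] [? _]; apply: Hdeg.
  have leafb : leafin S' b.
    exists c; split => //; move=> z [Sz za] Ebz.
    by case: (Hdeg b a c z Sb Sa Sc Sz (Esym Eab) Ebc Ebz) => [ac|[az|->]] //; [by case: ca | by case: za].
  have [d [[Sd da] db [y [[Sy ya] Edy Hy]] Hall]] :=
    IH S' l' Hl' Hcov' Hcon' Hdeg' b (conj Sb ba) leafb.
  exists d; split => //.
    exists y; split => // z Sz Edz.
    have [za|za] := pselect (z = a).
      by exfalso; apply: db; apply: Hb => //; apply: Esym; rewrite -za.
    by apply: Hy.
  move=> x Sx [y' [Sy' Exy' Hy']].
  have [xa|xa] := pselect (x = a); first by left.
  right.
  have [xb|xb] := pselect (x = b).
    exfalso; apply: ca; rewrite xb in Hy'.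
    by rewrite (Hy' c Sc Ebc) (Hy' a Sa (Esym Eab)).
  have y'a : y' <> a.
    by move=> ya'; apply: xb; apply: Hb => //; apply: Esym; rewrite -ya'.
  have : leafin S' x.
    by exists y'; split => // z [Sz _] Exz; apply: Hy'.
  by case/(Hall x (conj Sx xa)).
have onlyab : forall x, cin S a x -> x = a \/ x = b.
  move=> x; elim=> [|y z _ IHc Sz Eyz]; first by left.
  case: IHc => ey; subst y.
    by right; apply: Hb.
  by left; apply: contrapT => za; apply: nc; exists z.
exists b; split => //.
  exists a; split; [done | exact: Esym Eab | ]; move=> z Sz Ebz; apply: contrapT => za; apply: nc; exists z.
  by split.
move=> c Sc _; exact: onlyab (Hcon a c Sa Sc).
Qed.

End Graph.



Definition adjz (p q : latpt) : Prop :=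
  (p.1 - q.1) * (p.1 - q.1) + (p.1 - q.1) * (p.2 - q.2) + (p.2 - q.2) * (p.2 - q.2) = 1.
Definition rotp (i j : latpt) : latpt := (i.1 - (j.2 - i.2), i.2 + (j.1 - i.1) + (j.2 - i.2)).
Definition rotm (i j : latpt) : latpt := (i.1 + (j.1 - i.1) + (j.2 - i.2), i.2 - (j.1 - i.1)).
Lemma adjz_sym p q : adjz p q -> adjz q p.
Proof. rewrite /adjz; nia. Qed.
Lemma adjz_irr p : ~ adjz p p.
Proof. rewrite /adjz; lia. Qed.
Lemma dirs (a b : int) : a*a + a*b + b*b = 1 -> (a = 1 /\ b = 0) \/ (a = -1 /\ b = 0) \/ (a = 0 /\ b = 1) \/ (a = 0 /\ b = -1) \/ (a = 1 /\ b = -1) \/ (a = -1 /\ b = 1).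
Proof. move=> h. have hb : b*b <= 1 by nia. have ha : a*a <= 1 by nia. nia. Qed.

Lemma adj_rotp i j : adjz i j -> adjz i (rotp i j) /\ adjz j (rotp i j).
Proof. case: i j => [i1 i2] [j1 j2]; rewrite /adjz /rotp /=; split; nia. Qed.
Lemma adj_rotm i j : adjz i j -> adjz i (rotm i j) /\ adjz j (rotm i j).
Proof. case: i j => [i1 i2] [j1 j2]; rewrite /adjz /rotm /=; split; nia. Qed.
Lemma rotpm i j : adjz i j -> rotp i j <> rotm i j.
Proof. case: i j => [i1 i2] [j1 j2]; rewrite /adjz /rotm /rotp /= => h [e1 e2]; nia. Qed.
Lemma common i j k : adjz i j -> adjz i k -> adjz j k -> k = rotp i j \/ k = rotm i j.
Proof.
case: i j k => [i1 i2] [j1 j2] [k1 k2]; rewrite /adjz /rotm /rotp /= => h1 h2 h3.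
have := dirs h1; have := dirs h2; have := dirs h3.
move=> H3 H2 H1.
case: H1 => [[a1 a2]|[[a1 a2]|[[a1 a2]|[[a1 a2]|[[a1 a2]|[a1 a2]]]]]];
case: H2 => [[b1 b2]|[[b1 b2]|[[b1 b2]|[[b1 b2]|[[b1 b2]|[b1 b2]]]]]];
case: H3 => [[c1 c2]|[[c1 c2]|[[c1 c2]|[[c1 c2]|[[c1 c2]|[c1 c2]]]]]];
  first [ by left; congr (_, _); lia | by right; congr (_, _); lia | exfalso; lia ].
Qed.

Lemma seteq (A B : set latpt) : (forall x, A x <-> B x) -> A = B.
Proof. by move=> h; rewrite predeqE. Qed.

Lemma set3A (i j k : latpt) : [set i; j; k] = [set j; k; i].
Proof. apply: seteq => x /=; tauto. Qed.
Lemma set3B (i j k : latpt) : [set i; j; k] = [set i; k; j].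
Proof. apply: seteq => x /=; tauto. Qed.
Lemma set2C (i j : latpt) : [set i; j] = [set j; i].
Proof. apply: seteq => x /=; tauto. Qed.

Lemma set2_inv (a b c d : latpt) : [set a; b] = [set c; d] ->
  (a = c /\ b = d) \/ (a = d /\ b = c).
Proof.
move=> h.
have ha : [set c; d] a by rewrite -h; left.
have hb : [set c; d] b by rewrite -h; right.
have hc : [set a; b] c by rewrite h; left.
have hd : [set a; b] d by rewrite h; right.
case: ha => /= ea; case: hb => /= eb; case: hc => /= ec; case: hd => /= ed;
  first [left; split; congruence | right; split; congruence].
Qed.

Definition tri (i j k : latpt) := [/\ adjz i j, adjz j k & adjz i k].

Lemma triA i j k : tri i j k -> tri j k i.
Proof. by case=> h1 h2 h3; split => //; apply: adjz_sym. Qed.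
Lemma triB i j k : tri i j k -> tri i k j.
Proof. by case=> h1 h2 h3; split => //; apply: adjz_sym. Qed.

Definition opp (i j k : latpt) := if k == rotp i j then rotm i j else rotp i j.

Lemma opp_prop i j k : tri i j k -> tri i j (opp i j k) /\ opp i j k <> k.
Proof.
case=> h1 h2 h3; rewrite /opp; case: eqP => [->|ne].
  have [? ?] := adj_rotm h1; split; first by split.
  by move/esym; apply: rotpm.
have [? ?] := adj_rotp h1; split; first by split.
case: (common h1 h3 h2) => ek; [by case: ne | rewrite ek; exact: rotpm h1].
Qed.

Lemma opp_uniq i j k z : tri i j k -> adjz i z -> adjz j z -> z <> k -> z = opp i j k.
Proof.
case=> h1 h2 h3 hiz hjz zk; rewrite /opp.
case: (common h1 h3 h2) => ek; case: (common h1 hiz hjz) => ez; subst k z;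
  rewrite ?eqxx //; try by case: zk.
by case: eqP => // e; case: (rotpm h1 (esym e)).
Qed.

Lemma Lint i j k : tri i j k -> [set i; j; k] `&` [set i; j; opp i j k] = [set i; j].
Proof.
move=> t; have [[a1 a2 a3] ok] := opp_prop t; case: t => h1 h2 h3.
apply: seteq => x /=; split; last by tauto.
case=> [[[->|->]|->] [[|]|]] //; try tauto.
move=> e; exfalso; exact: ok.
Qed.

Lemma Lopp_aux i j k z (T' : set latpt) : tri i j k -> adjz i z -> adjz j z ->
  T' = [set i; j; z] -> T' <> [set i; j; k] -> T' = [set i; j; opp i j k].
Proof.
move=> t hi hj e ne; rewrite e (opp_uniq t hi hj) // => zk; apply: ne; by rewrite e zk.
Qed.

Lemma Lopp i j k a b c (T' : set latpt) : tri i j k -> tri a b c -> T' = [set a; b; c] ->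
  T' i -> T' j -> T' <> [set i; j; k] -> T' = [set i; j; opp i j k].
Proof.
move=> t [ab bc ac] eT hi hj ne; rewrite eT /= in hi hj.
have ij : i <> j by case: t => h _ _ e; subst; exact: adjz_irr h.
case: hi => [[ei|ei]|ei]; case: hj => [[ej|ej]|ej]; subst i j; try by case: ij.
- apply: (Lopp_aux (z:=c)) => //; try exact: adjz_sym.
- apply: (Lopp_aux (z:=b)) => //; try exact: adjz_sym. by rewrite eT; apply: seteq => x /=; tauto.
- apply: (Lopp_aux (z:=c)) => //; try exact: adjz_sym. by rewrite eT; apply: seteq => x /=; tauto.
- apply: (Lopp_aux (z:=a)) => //; try exact: adjz_sym. by rewrite eT; apply: seteq => x /=; tauto.
- apply: (Lopp_aux (z:=b)) => //; try exact: adjz_sym. by rewrite eT; apply: seteq => x /=; tauto.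
- apply: (Lopp_aux (z:=a)) => //; try exact: adjz_sym. by rewrite eT; apply: seteq => x /=; tauto.
Qed.



Lemma adjE (R : realType) (eps : R) (p q : latpt) : 0 < eps -> Defs.adjacent eps p q <-> adjz p q.
Proof.
move=> e0; rewrite /Defs.adjacent /lat_dist /lat_point /= /adjz.
set s := Num.sqrt (3 : R).
have s2 : s ^+ 2 = 3 by rewrite sqr_sqrtr // ler0n.
set X := (_ + _ + _)%R.
have XE : ((eps * (p.1%:~R + p.2%:~R / 2) - eps * (q.1%:~R + q.2%:~R / 2)) ^+ 2 +
    (eps * (p.2%:~R * s / 2) - eps * (q.2%:~R * s / 2)) ^+ 2) = eps ^+ 2 * X%:~R.
  rewrite /X !rmorphD !rmorphM !rmorphB /=.
  set a1 := (p.1)%:~R; set a2 := (p.2)%:~R; set b1 := (q.1)%:~R; set b2 := (q.2)%:~R.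
  have -> : (eps * (a2 * s / 2) - eps * (b2 * s / 2)) ^+ 2 =
           eps ^+ 2 * (a2 - b2) ^+ 2 * s ^+ 2 / 4 by field.
  by rewrite s2; field.
rewrite XE.
have X0 : (0 <= X)%R.
  rewrite /X; set a := p.1 - q.1; set b := p.2 - q.2.
  have h1 : 0 <= (2 * a + b) * (2 * a + b) by rewrite -expr2 sqr_ge0.
  have h2 : 0 <= b * b by rewrite -expr2 sqr_ge0.
  nia.
have X0' : (0 : R) <= X%:~R by rewrite ler0z.
split.
  move=> h.
  have : eps ^+ 2 * X%:~R = eps ^+ 2.
    by rewrite -{2}h sqr_sqrtr // mulr_ge0 // sqr_ge0.
  move=> h2; apply/eqP; rewrite -(eqr_int R); apply/eqP.
  have e2 : eps ^+ 2 != 0 by rewrite expf_neq0 // gt_eqF.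
  by apply: (mulfI e2); rewrite h2 mulr1.
move=> ->; rewrite mulr1 sqrtr_sqr gtr0_norm //.
Qed.

Section Tri.
Variable R : realType.
Variable eps : R.
Hypothesis e0 : 0 < eps.
Variable u : latpt -> 'rV[R]_3.
Hypothesis sph : forall i, on_sphere (u i).

Definition Nz i j := u i = - u j.

Lemma Nsym x y : Nz x y -> Nz y x.
Proof. by rewrite /Nz => ->; rewrite opprK. Qed.

Lemma notall i j k : Nz i j -> Nz j k -> Nz i k -> False.
Proof.
rewrite /Nz => h1 h2 h3.
have e : u k = - u k by rewrite -h3 h1 h2 opprK.
have e0' : forall t, u k 0 t = 0.
  move=> t; have := congr1 (fun M : 'rV[R]_3 => M 0 t) e; rewrite /= mxE; lra.
have := sph k; rewrite /on_sphere big1 => [|t _]; last by rewrite e0' expr0n.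
by move/eqP; rewrite eq_sym oner_eq0.
Qed.

Lemma triangleE T : is_triangle eps T <-> exists i j k, T = [set i; j; k] /\ tri i j k.
Proof.
split.
  by case=> i [j [k [eT h1 h2 h3]]]; exists i, j, k; split => //; split; apply/(adjE _ _ e0).
case=> i [j [k [eT [h1 h2 h3]]]]; exists i, j, k; split => //; apply/(adjE _ _ e0) => //.
Qed.

Lemma inN_pair x y : adjz x y -> (in_N eps u [set x; y] <-> Nz x y).
Proof.
move=> a; split.
  case=> i [j [e _ h]]; case: (set2_inv e) => [[-> ->]|[-> ->]] //.
  exact: Nsym.
by move=> h; exists x, y; split => //; apply/(adjE _ _ e0).
Qed.

Lemma inC_pair x y : adjz x y -> (in_C eps u [set x; y] <-> ~ Nz x y).
Proof.
move=> a; rewrite /in_C; split.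
  by case=> _ h; rewrite -inN_pair.
by move=> h; split; [exists x, y; split => //; apply/(adjE _ _ e0) | rewrite inN_pair].
Qed.

Lemma nbr_bwd i j k : tri i j k -> Nz i j ->
  Defs.neighbours eps u [set i; j; k] [set i; j; opp i j k].
Proof.
move=> t h; have [t' _] := opp_prop t; split.
- by apply/triangleE; exists i, j, k.
- by apply/triangleE; exists i, j, (opp i j k).
- by rewrite Lint // inN_pair //; case: t.
Qed.

Lemma tri_ne i j k : tri i j k -> [/\ i <> j, j <> k & i <> k].
Proof. by case=> h1 h2 h3; split => e; subst; apply: adjz_irr; eauto. Qed.

Lemma nbr_fwd i j k T' : tri i j k -> Defs.neighbours eps u [set i; j; k] T' ->
  (T' = [set i; j; opp i j k] /\ Nz i j) \/ (T' = [set j; k; opp j k i] /\ Nz j k)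
  \/ (T' = [set i; k; opp i k j] /\ Nz i k).
Proof.
move=> t [_ /triangleE [a [b [c [eT tabc]]]] [x [y [e axy hxy]]]].
have axy' : adjz x y by apply/(adjE _ _ e0).
have hx : ([set i; j; k] `&` T') x by rewrite e; left.
have hy : ([set i; j; k] `&` T') y by rewrite e; right.
have ne : T' <> [set i; j; k].
  move=> eT'; rewrite eT' setIid in e.
  have [ij jk ik] := tri_ne t.
  have hi : [set x; y] i by rewrite -e; left; left.
  have hj : [set x; y] j by rewrite -e; left; right.
  have hk : [set x; y] k by rewrite -e; right.
  by case: hi => /= ei; case: hj => /= ej; case: hk => /= ek; congruence.
case: hx => [[[/= ex|/= ex]|/= ex] Tx]; case: hy => [[[/= ey|/= ey]|/= ey] Ty]; subst x y;
  try by case: (adjz_irr axy').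
- by left; split => //; apply: (Lopp t tabc eT).
- right; right; split => //; apply: (Lopp (triB t) tabc eT) => //; by rewrite -set3B.
- by left; split; [apply: (Lopp t tabc eT) | apply: Nsym].
- right; left; split => //; apply: (Lopp (triA t) tabc eT) => //; by rewrite -set3A.
- right; right; split; last exact: Nsym.
  apply: (Lopp (triB t) tabc eT) => //; by rewrite -set3B.
- right; left; split; last exact: Nsym.
  apply: (Lopp (triA t) tabc eT) => //; by rewrite -set3A.
Qed.

Lemma nbrE i j k T' : tri i j k -> (Defs.neighbours eps u [set i; j; k] T' <->
  (T' = [set i; j; opp i j k] /\ Nz i j) \/ (T' = [set j; k; opp j k i] /\ Nz j k)
  \/ (T' = [set i; k; opp i k j] /\ Nz i k)).
Proof.
move=> t; split; first exact: nbr_fwd.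
case=> [[-> h]|[[-> h]|[-> h]]].
- exact: nbr_bwd.
- rewrite set3A; exact: nbr_bwd (triA t) h.
- rewrite set3B; exact: nbr_bwd (triB t) h.
Qed.

Lemma edgesT i j k e : tri i j k -> edge_of eps e [set i; j; k] ->
  e = [set i; j] \/ e = [set j; k] \/ e = [set i; k].
Proof.
move=> t [[x [y [-> a]]] sub].
have a' : adjz x y by apply/(adjE _ _ e0).
have hx : [set i; j; k] x by apply: sub; left.
have hy : [set i; j; k] y by apply: sub; right.
case: hx => [[/= ex|/= ex]|/= ex]; case: hy => [[/= ey|/= ey]|/= ey]; subst x y;
  try by case: (adjz_irr a').
all: first [tauto | left; exact: set2C | right; left; exact: set2C | right; right; exact: set2C].
Qed.

Lemma edge_ok x y (T : set latpt) : adjz x y -> T x -> T y -> edge_of eps [set x; y] T.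
Proof.
move=> a hx hy; split; first by exists x, y; split => //; apply/(adjE _ _ e0).
by move=> z [] ->.
Qed.

Lemma edges_ne i j k : tri i j k ->
  [/\ [set i; j] <> [set j; k], [set i; j] <> [set i; k] & [set j; k] <> [set i; k]].
Proof.
move=> t; have [ij jk ik] := tri_ne t.
split => /set2_inv; case=> [[]|[]] => e1 e2; subst; tauto.
Qed.

Lemma twoN i j k : tri i j k -> (two_edges_N eps u [set i; j; k] <->
  (Nz i j /\ Nz j k) \/ (Nz i j /\ Nz i k) \/ (Nz j k /\ Nz i k)).
Proof.
move=> t; have [ne1 ne2 ne3] := edges_ne t; case: (t) => a1 a2 a3.
split.
  case=> e1 [e2 [ne h1 h2 n1 n2]].
  case: (edgesT t h1) => [?|[?|?]]; case: (edgesT t h2) => [?|[?|?]]; subst e1 e2;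
    (try by case: ne); move: n1 n2; rewrite ?(inN_pair a1) ?(inN_pair a2) ?(inN_pair a3); tauto.
case=> [[n1 n2]|[[n1 n2]|[n1 n2]]].
- exists [set i; j], [set j; k]; split => //; try apply: edge_ok => //; try by rewrite /=; tauto.
  all: try (apply/(inN_pair a1); done); try (apply/(inN_pair a2); done); try (apply/(inN_pair a3); done).
- exists [set i; j], [set i; k]; split => //; try apply: edge_ok => //; try by rewrite /=; tauto.
  all: try (apply/(inN_pair a1); done); try (apply/(inN_pair a2); done); try (apply/(inN_pair a3); done).
- exists [set j; k], [set i; k]; split => //; try apply: edge_ok => //; try by rewrite /=; tauto.
  all: try (apply/(inN_pair a1); done); try (apply/(inN_pair a2); done); try (apply/(inN_pair a3); done).
Qed.

Lemma twoC i j k : tri i j k -> (two_edges_C eps u [set i; j; k] <->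
  (~ Nz i j /\ ~ Nz j k) \/ (~ Nz i j /\ ~ Nz i k) \/ (~ Nz j k /\ ~ Nz i k)).
Proof.
move=> t; have [ne1 ne2 ne3] := edges_ne t; case: (t) => a1 a2 a3.
split.
  case=> e1 [e2 [ne h1 h2 n1 n2]].
  case: (edgesT t h1) => [?|[?|?]]; case: (edgesT t h2) => [?|[?|?]]; subst e1 e2;
    (try by case: ne); move: n1 n2; rewrite ?(inC_pair a1) ?(inC_pair a2) ?(inC_pair a3); tauto.
case=> [[n1 n2]|[[n1 n2]|[n1 n2]]].
- exists [set i; j], [set j; k]; split => //; try apply: edge_ok => //; try by rewrite /=; tauto.
  all: try (apply/(inC_pair a1); done); try (apply/(inC_pair a2); done); try (apply/(inC_pair a3); done).
- exists [set i; j], [set i; k]; split => //; try apply: edge_ok => //; try by rewrite /=; tauto.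
  all: try (apply/(inC_pair a1); done); try (apply/(inC_pair a2); done); try (apply/(inC_pair a3); done).
- exists [set j; k], [set i; k]; split => //; try apply: edge_ok => //; try by rewrite /=; tauto.
  all: try (apply/(inC_pair a1); done); try (apply/(inC_pair a2); done); try (apply/(inC_pair a3); done).
Qed.

Lemma inN_tri i j k : tri i j k -> ~ in_N eps u [set i; j; k].
Proof.
move=> t [x [y [e _ _]]]; have [ij jk ik] := tri_ne t.
have hi : [set x; y] i by rewrite -e; left; left.
have hj : [set x; y] j by rewrite -e; left; right.
have hk : [set x; y] k by rewrite -e; right.
by case: hi => /= ei; case: hj => /= ej; case: hk => /= ek; congruence.
Qed.

Lemma nb_irr T : is_triangle eps T -> ~ Defs.neighbours eps u T T.
Proof.
case/triangleE => i [j [k [-> t]]] [_ _]; rewrite setIid; exact: inN_tri.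
Qed.

Lemma O_ne i j k : tri i j k ->
  [/\ [set i; j; opp i j k] <> [set j; k; opp j k i],
      [set i; j; opp i j k] <> [set i; k; opp i k j] &
      [set j; k; opp j k i] <> [set i; k; opp i k j]].
Proof.
move=> t; have [ne1 ne2 ne3] := edges_ne t.
have L1 := Lint t.
have L2 := Lint (triA t); rewrite -set3A in L2.
have L3 := Lint (triB t); rewrite -set3B in L3.
split => e.
- by apply: ne1; move: L1; rewrite e L2 => ->.
- by apply: ne2; move: L1; rewrite e L3 => ->.
- by apply: ne3; move: L2; rewrite e L3 => ->.
Qed.

Lemma two_nb_N i j k a b : tri i j k -> Defs.neighbours eps u [set i; j; k] a ->
  Defs.neighbours eps u [set i; j; k] b -> a <> b -> two_edges_N eps u [set i; j; k].
Proof.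
move=> t /(nbrE _ t) ha /(nbrE _ t) hb ab; apply/(twoN t).
case: ha => [[ea na]|[[ea na]|[ea na]]]; case: hb => [[eb nb]|[[eb nb]|[eb nb]]];
  subst a b; try by case: ab.
all: try tauto.
all: do ?[ right; left; split; by [] ].
Qed.

Lemma NC_excl i j k : tri i j k -> two_edges_N eps u [set i; j; k] ->
  two_edges_C eps u [set i; j; k] -> False.
Proof. by move=> t /(twoN t) h1 /(twoC t) h2; tauto. Qed.

Lemma leaf_C i j k : tri i j k ->
  (forall a b, Defs.neighbours eps u [set i; j; k] a ->
               Defs.neighbours eps u [set i; j; k] b -> a = b) ->
  two_edges_C eps u [set i; j; k].
Proof.
move=> t h; apply/(twoC t); have [q1 q2 q3] := O_ne t.
have n1 : Nz i j -> Defs.neighbours eps u [set i; j; k] [set i; j; opp i j k].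
  by move=> n; apply/(nbrE _ t); left.
have n2 : Nz j k -> Defs.neighbours eps u [set i; j; k] [set j; k; opp j k i].
  by move=> n; apply/(nbrE _ t); right; left.
have n3 : Nz i k -> Defs.neighbours eps u [set i; j; k] [set i; k; opp i k j].
  by move=> n; apply/(nbrE _ t); right; right.
case: (pselect (Nz i j)) => a1; case: (pselect (Nz j k)) => a2;
  case: (pselect (Nz i k)) => a3; try tauto.
- by case: (notall a1 a2 a3).
- by case: q1; apply: h; [apply: n1 | apply: n2].
- by case: q2; apply: h; [apply: n1 | apply: n3].
- by case: q3; apply: h; [apply: n2 | apply: n3].
Qed.

Lemma deg2 i j k a b c : tri i j k -> Defs.neighbours eps u [set i; j; k] a ->
  Defs.neighbours eps u [set i; j; k] b -> Defs.neighbours eps u [set i; j; k] c ->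
  a = b \/ a = c \/ b = c.
Proof.
move=> t /(nbrE _ t) ha /(nbrE _ t) hb /(nbrE _ t) hc.
case: ha => [[-> na]|[[-> na]|[-> na]]]; case: hb => [[-> nb]|[[-> nb]|[-> nb]]];
  case: hc => [[-> nc]|[[-> nc]|[-> nc]]];
  first [by left | by right; left | by right; right | exfalso; apply: (@notall i j k); by []].
Qed.

End Tri.



Section Main.
Variable R : realType.
Variables (eps : R) (Om : set (R * R)) (u : latpt -> 'rV[R]_3) (S : set (set latpt)).
Hypotheses (e0 : 0 < eps) (bOm : bounded_set Om) (sph : forall i, on_sphere (u i))
  (hN : forall i, ~ Om (lat_point eps i) -> u i = north R)
  (Stri : forall T, S T -> is_triangle eps T)
  (Scon : forall T T', S T -> S T' -> Defs.connected eps u T T')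
  (Smax : forall S', pw_connected eps u S' -> S `<=` S' -> S' = S).

Local Notation nb := (Defs.neighbours eps u).
Local Notation conn := (Defs.connected eps u).

Lemma adj_close p q : adjz p q -> (-1 <= p.1 - q.1 <= 1) && (-1 <= p.2 - q.2 <= 1).
Proof. move/dirs; lia. Qed.


Lemma nb_sym T T' : nb T T' -> nb T' T.
Proof. by case=> a b c; split => //; rewrite setIC. Qed.

Lemma conn_trans A B C : conn A B -> conn B C -> conn A C.
Proof.
move=> hAB hBC; elim: hBC hAB => [T|T1 T2 T3 _ IH n] h //.
exact: (Defs.conn_step (IH h) n).
Qed.

Lemma conn_sym A B : conn A B -> conn B A.
Proof.
elim => [T|T1 T2 T3 _ IH n]; first exact: Defs.conn_refl.
apply: conn_trans _ IH; exact: (Defs.conn_step (Defs.conn_refl _ _ _) (nb_sym n)).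
Qed.

Lemma closure T T' : S T -> nb T T' -> S T'.
Proof.
move=> ST n.
have n1 : conn T T' := Defs.conn_step (Defs.conn_refl _ _ _) n.
have e : S `|` [set T'] = S.
  apply: Smax; last by move=> A SA; left.
  split.
    by move=> A [SA| ->]; [exact: Stri | case: n].
  move=> A B [SA| ->] [SB| ->].
  - exact: Scon.
  - exact: conn_trans (Scon SA ST) n1.
  - exact: conn_sym (conn_trans (Scon SB ST) n1).
  - exact: Defs.conn_refl.
by rewrite -e; right.
Qed.

Lemma S_ne : exists T, S T.
Proof.
apply: contrapT => ne.
pose T0 : set latpt := [set (0, 0); (1, 0); (0, 1)].
have e : [set T0] = S.
  apply: Smax; last by move=> A SA; case: ne; exists A.
  split.
    move=> A /= ->; apply/(triangleE e0); exists (0, 0), (1, 0), (0, 1); split => //.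
  by move=> A B /= -> ->; exact: Defs.conn_refl.
by apply: ne; exists T0; rewrite -e.
Qed.


Lemma Nz_Om x y : Nz u x y -> Om (lat_point eps x) \/ Om (lat_point eps y).
Proof.
move=> h; case: (pselect (Om (lat_point eps x))) => [|hx]; first by left.
case: (pselect (Om (lat_point eps y))) => [|hy]; first by right.
exfalso; move: h; rewrite /Nz (hN hx) (hN hy).
move/(congr1 (fun M : 'rV[R]_3 => M 0 (2 : 'I_3))); rewrite !mxE /= => h; lra.
Qed.

Lemma bound_box : exists K : nat, forall v : latpt, Om (lat_point eps v) ->
  `|v.1| < K%:Z /\ `|v.2| < K%:Z.
Proof.
have [M [_ HM]] := bOm.
have hM : forall x, Om x -> `|x| <= M + 1.
  by move=> x Ox; apply: (HM (M + 1)) => //; lra.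
set N := `|M + 1|.
have MN : M + 1 <= N by apply: ler_norm.
set B := 2 * N / eps.
have B0 : 0 <= B by rewrite /B; apply: divr_ge0; [apply: mulr_ge0 => //; apply: normr_ge0 | apply: ltW].
exists (Num.Def.archi_bound B) => v Ov.
have KB := archi_boundP B0.
have := hM _ Ov; rewrite prod_normE ge_max /lat_point /= => /andP [].
set a : R := v.1%:~R; set b : R := v.2%:~R; set s := Num.sqrt (3 : R) => h1 h2.
have s0 : 0 <= s by apply: sqrtr_ge0.
have s2 : s ^+ 2 = 3 by rewrite sqr_sqrtr // ler0n.
have s1 : 1 <= s by nra.
rewrite normrM (gtr0_norm e0) in h1.
rewrite normrM (gtr0_norm e0) in h2.
have eb : `|b * s / 2| = `|b| * (s / 2).
  by rewrite -mulrA normrM; congr (_ * _); apply: ger0_norm; rewrite divr_ge0.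
rewrite eb in h2.
have hb0 : 0 <= eps * `|b| * (s - 1) by apply: mulr_ge0; [apply: mulr_ge0; [exact: ltW | exact: normr_ge0] | rewrite subr_ge0].
have hb : `|b| <= B by rewrite /B ler_pdivlMr //; lra.
have ha0 : `|a| <= `|a + b / 2| + `|b| / 2.
  have -> : `|b| / 2 = `|b / 2| by rewrite normrM normfV (ger0_norm (ler0n _ 2)).
  by have := ler_normB (a + b / 2) (b / 2); rewrite addrK.
have ha1 : eps * `|a| <= eps * (`|a + b / 2| + `|b| / 2) by rewrite ler_pM2l.
have ha : `|a| <= B by rewrite /B ler_pdivlMr //; lra.
have KZ : (Num.Def.archi_bound B)%:R = ((Num.Def.archi_bound B)%:Z)%:~R :> R by [].
split; rewrite -(ltr_int R) intr_norm -KZ; [exact: le_lt_trans ha KB | exact: le_lt_trans hb KB].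
Qed.

Lemma cover : (forall T, S T -> exists T', nb T T') ->
  exists l : seq (set latpt), forall T, S T -> List.In T l.
Proof.
move=> hasnb; have [K HK] := bound_box.
pose rng := List.map (fun n : nat => n%:Z - (K%:Z + 1)) (List.seq 0 (2 * K + 3)).
pose box := List.flat_map (fun a => List.map (fun b => (a, b)) rng) rng.
pose l := List.flat_map (fun x => List.flat_map
            (fun y => List.map (fun z => [set x; y; z]) box) box) box.
have inrng : forall a : int, -(K%:Z+1) <= a <= K%:Z + 1 -> List.In a rng.
  move=> a h; apply/List.in_map_iff; exists (absz (a + K%:Z + 1)); split; first lia.
  apply/List.in_seq; lia.
have inbox : forall p : latpt, -(K%:Z+1) <= p.1 <= K%:Z + 1 ->
    -(K%:Z+1) <= p.2 <= K%:Z + 1 -> List.In p box.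
  move=> [p1 p2] /= h1 h2; apply/List.in_flat_map; exists p1; split; first exact: inrng.
  by apply/List.in_map_iff; exists p2; split => //; exact: inrng.
exists l => T ST.
have [i [j [k [eT t]]]] := (triangleE e0 T).1 (Stri ST).
have [T' n] := hasnb T ST; rewrite eT in n.
have [v [hv Ov]] : exists v, (v = i \/ v = j \/ v = k) /\ Om (lat_point eps v).
  case/(nbrE e0 u _ t): n => [[_ h]|[[_ h]|[_ h]]]; case: (Nz_Om h) => Ov.
  - by exists i; split => //; left.
  - by exists j; split => //; right; left.
  - by exists j; split => //; right; left.
  - by exists k; split => //; right; right.
  - by exists i; split => //; left.
  - by exists k; split => //; right; right.
have [b1 b2] := HK v Ov.
case: t => aij ajk aik.
have c1 := adj_close aij; have c2 := adj_close ajk; have c3 := adj_close aik.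
have [bi [bj bk]] : (-(K%:Z+1) <= i.1 <= K%:Z+1) && (-(K%:Z+1) <= i.2 <= K%:Z+1) /\
   (-(K%:Z+1) <= j.1 <= K%:Z+1) && (-(K%:Z+1) <= j.2 <= K%:Z+1) /\
   (-(K%:Z+1) <= k.1 <= K%:Z+1) && (-(K%:Z+1) <= k.2 <= K%:Z+1).
  by case: hv => [ev|[ev|ev]]; subst v; lia.
rewrite eT; apply/List.in_flat_map; exists i; split; first by apply: inbox; lia.
apply/List.in_flat_map; exists j; split; first by apply: inbox; lia.
apply/List.in_map_iff; exists k; split => //; apply: inbox; lia.
Qed.

Lemma conn_end A B : conn A B -> A = B \/ exists C, nb B C.
Proof.
elim => [T|T1 T2 T3 _ _ n]; [by left | right; exists T2; exact: nb_sym n].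
Qed.

Lemma conn_start A B : conn A B -> A = B \/ exists C, nb A C.
Proof.
elim => [T|T1 T2 T3 _ IH n]; first by left.
right; case: IH => [->|//]; by exists T3.
Qed.

Lemma Eirr : forall x, ~ nb x x.
Proof. by move=> x h; case: (h) => tx _ _; exact: (nb_irr e0 tx h). Qed.

Lemma Hcin : forall x y, S x -> S y -> cin nb S x y.
Proof.
move=> x y Sx Sy; have h := Scon Sx Sy; move: h Sx.
elim => [T _|T1 T2 T3 _ IH n ST1]; first exact: cin_refl.
have c := IH ST1; apply: (cin_step c _ n); exact: closure (cin_in c ST1) n.
Qed.

Lemma Hdeg : forall x y z w, S x -> S y -> S z -> S w -> nb x y -> nb x z -> nb x w ->
  y = z \/ y = w \/ z = w.
Proof.
move=> x y z w Sx _ _ _; have [i [j [k [-> t]]]] := (triangleE e0 x).1 (Stri Sx).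
exact: (deg2 e0 sph t).
Qed.

Lemma main_res : exactly_one_of3
    (exists T, is_triangle eps T /\ S = [set T])
    (forall T, S T -> two_edges_N eps u T)
    (exists T1 T2, [/\ T1 <> T2, S T1 /\ S T2,
        two_edges_C eps u T1 /\ two_edges_C eps u T2,
        (forall T, S T -> two_edges_C eps u T -> T = T1 \/ T = T2) &
        (forall T, S T -> T <> T1 -> T <> T2 -> two_edges_N eps u T)]).
Proof.
have [T0 S0] := S_ne.
have tri_of : forall T, S T -> exists i j k, T = [set i; j; k] /\ tri i j k.
  by move=> T ST; apply/(triangleE e0); exact: Stri.
have NCx : forall T, S T -> two_edges_N eps u T -> two_edges_C eps u T -> False.
  move=> T ST; have [i [j [k [-> t]]]] := tri_of T ST; exact: (NC_excl e0 t).
have twoN' : forall T a b, S T -> nb T a -> nb T b -> a <> b -> two_edges_N eps u T.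
  move=> T a b ST; have [i [j [k [-> t]]]] := tri_of T ST; exact: (two_nb_N e0 t).
have leafC' : forall T, S T -> (forall a b, nb T a -> nb T b -> a = b) -> two_edges_C eps u T.
  move=> T ST; have [i [j [k [-> t]]]] := tri_of T ST; exact: (leaf_C e0 sph t).
have onenb : forall T, S T -> leafin nb S T -> forall a b, nb T a -> nb T b -> a = b.
  move=> T ST [y [Sy _ hy]] a b na nb'.
  by rewrite (hy a (closure ST na) na) (hy b (closure ST nb') nb').
case: (pselect (exists T', nb T0 T')) => [[T1 n01]|non].
  have hasnb : forall T, S T -> exists T', nb T T'.
    move=> T ST; case: (conn_end (Scon S0 ST)) => [<-|//]; by exists T1.
  have notI : ~ exists T, is_triangle eps T /\ S = [set T].
    move=> [T [tT eS]]; have ST : S T by rewrite eS.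
    have [T' n] := hasnb T ST; have ST' := closure ST n; rewrite eS /= in ST'.
    by rewrite ST' in n; exact: (nb_irr e0 tT n).
  have nonleaf : forall T, S T -> ~ leafin nb S T -> two_edges_N eps u T.
    move=> T ST nl; have [y ny] := hasnb T ST.
    apply: contrapT => H; apply: nl; exists y; split; [exact: closure ST ny | exact: ny |].
    move=> z Sz nz; apply: contrapT => zy; apply: H; exact: (twoN' T z y).
  case: (pselect (exists T, S T /\ leafin nb S T)) => [[L [SL lL]]|noleaf].
    have [cl Hcl] := cover hasnb.
    have [L2 [SL2 ne lL2 Hall]] := graph_main nb_sym Eirr (n := length cl) (l := cl)
      (le_n _) Hcl Hcin Hdeg SL lL.
    have CL := leafC' L SL (onenb L SL lL).
    have CL2 := leafC' L2 SL2 (onenb L2 SL2 lL2).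
    right; right; split; first exact: notI.
    split; first by move=> Hii; exact: (NCx L SL (Hii L SL) CL).
    exists L, L2; split => //.
    - by move=> e; apply: ne.
    - move=> T ST CT; apply: Hall => //; apply: contrapT => nl.
      exact: (NCx T ST (nonleaf T ST nl) CT).
    - move=> T ST n1 n2; apply: nonleaf => // lT.
      by case: (Hall T ST lT).
  right; left; split; first exact: notI.
  have allN : forall T, S T -> two_edges_N eps u T.
    by move=> T ST; apply: nonleaf => // lT; apply: noleaf; exists T.
  split => //.
  by move=> [A [B [_ [SA _] [CA _] _ _]]]; exact: (NCx A SA (allN A SA) CA).
have eS : S = [set T0].
  rewrite predeqE => T; split => [ST|/= ->] //=.
  case: (conn_start (Scon S0 ST)) => [//|[C n]]; by case: non; exists C.
left; split; first by exists T0; split => //; exact: Stri.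
split.
  move=> Hii; have := Hii T0 S0; have [i [j [k [eT t]]]] := tri_of T0 S0.
  rewrite eT => /(twoN e0 u t) h; apply: non; rewrite eT.
  case: h => [[h _]|[[h _]|[h _]]].
  - by exists [set i; j; opp i j k]; apply/(nbrE e0 u _ t); left.
  - by exists [set i; j; opp i j k]; apply/(nbrE e0 u _ t); left.
  - by exists [set j; k; opp j k i]; apply/(nbrE e0 u _ t); right; left.
move=> [A [B [ne [SA SB] _ _ _]]]; apply: ne; rewrite eS /= in SA SB; by rewrite SA SB.
Qed.

End Main.

Unset Implicit Arguments.

Theorem lemma5p1 (R : realType) (eps : R) (Om : set (R * R))
  (u : latpt -> 'rV[R]_3) (S : set (set latpt)) :
  0 < eps -> open Om -> bounded_set Om ->
  SF eps Om u -> admissible_region eps u S ->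
  exactly_one_of3
    (* (i) R is a single triangle of T_eps *)
    (exists T, is_triangle eps T /\ S = [set T])
    (* (ii) every triangle in R has two edges in N_eps(u) *)
    (forall T, S T -> two_edges_N eps u T)
    (* (iii) exactly two triangles in R have two edges in C_eps(u), all
       other triangles in R have two edges in N_eps(u) *)
    (exists T1 T2, [/\ T1 <> T2, S T1 /\ S T2,
        two_edges_C eps u T1 /\ two_edges_C eps u T2,
        (forall T, S T -> two_edges_C eps u T -> T = T1 \/ T = T2) &
        (forall T, S T -> T <> T1 -> T <> T2 -> two_edges_N eps u T)]).
Proof.
move=> e0 _ bOm [sph hN] [[Stri Scon] Smax].
exact: (main_res e0 bOm sph hN Stri Scon Smax).
Qed.
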